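(* Let $\mathcal{V}$ be a non-trivial quantale, $\widehat{\mathsf{F}}$ a lax extension of a functor $\mathsf{F}\colon\mathbf{Set}\to\mathbf{Set}$ to $\mathbf{Rel}(\mathcal{V})$, and $\alpha\colon X\to\mathsf{F}X$ an $\mathsf{F}$-coalgebra. Every symmetric $\widehat{\mathsf{F}}$-simulation $s$ on $\alpha$ satisfies $\alpha\cdot s\le\widehat{\mathsf{F}}^s s\cdot\alpha$, i.e. is an $\widehat{\mathsf{F}}^s$-simulation, where $\widehat{\mathsf{F}}^s s=\widehat{\mathsf{F}}s\wedge(\widehat{\mathsf{F}}s)^\circ$.
   Context: A quantale $(\mathcal{V},\otimes,k)$ is a complete lattice with commutative monoid structure, each $u\otimes-$ preserving joins, $\hom(u,-)$ its right adjoint; non-trivial: $\bot\ne\top$. $\mathcal{V}$-relations $r\colon X\nrightarrow Y$ are maps $X\times Y\to\mathcal{V}$, composed by $(s\cdot r)(x,z)=\bigvee_y r(x,y)\otimes s(y,z)$, converse $r^\circ(y,x)=r(x,y)$, ordered pointwise, meets pointwise; a function (e.g. $\alpha$) is viewed as the relation with value $k$ on its graph and $\bot$ elsewhere. A lax extension of $\mathsf{F}$ assigns to each $r\colon X\nrightarrow Y$ a $\widehat{\mathsf{F}}r\colon\mathsf{F}X\nrightarrow\mathsf{F}Y$ with (L1) $r\le r'\Rightarrow\widehat{\mathsf{F}}r\le\widehat{\mathsf{F}}r'$, (L2) $\widehat{\mathsf{F}}s\cdot\widehat{\mathsf{F}}r\le\widehat{\mathsf{F}}(s\cdot r)$, (L3)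 $\mathsf{F}f\le\widehat{\mathsf{F}}f$, $(\mathsf{F}f)^\circ\le\widehat{\mathsf{F}}(f^\circ)$. A $\mathcal{V}$-relation $s\colon X\nrightarrow X$ is symmetric if $s=s^\circ$, and is an $\widehat{\mathsf{F}}$-simulation on $\alpha$ if $\alpha\cdot s\le\widehat{\mathsf{F}}s\cdot\alpha$. *)

(* Defs.v *)
Record quantale := Quantale {
  qcar :> Type;
  qle : qcar -> qcar -> Prop;
  qle_refl : forall a, qle a a;
  qle_trans : forall a b c, qle a b -> qle b c -> qle a c;
  qle_antisym : forall a b, qle a b -> qle b a -> a = b;
  qsup : forall I : Type, (I -> qcar) -> qcar;
  qsup_ub : forall (I : Type) (f : I -> qcar) (i : I), qle (f i) (qsup I f);
  qsup_least : forall (I : Type) (f : I -> qcar) (b : qcar),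
      (forall i, qle (f i) b) -> qle (qsup I f) b;
  qten : qcar -> qcar -> qcar;
  qk : qcar;
  qten_assoc : forall a b c, qten a (qten b c) = qten (qten a b) c;
  qten_comm : forall a b, qten a b = qten b a;
  qten_k : forall a, qten qk a = a;
  qten_sup : forall (u : qcar) (I : Type) (f : I -> qcar),
      qten u (qsup I f) = qsup I (fun i => qten u (f i))
}.

Arguments qle {V} : rename.
Arguments qsup {V} : rename.
Arguments qten {V} : rename.
Arguments qk {V} : rename.

Definition qbot (V : quantale) : V := qsup False (fun e => match e with end).
Definition qtop (V : quantale) : V := qsup V (fun a => a).
Definition qmeet {V : quantale} (a b : V) : V :=
  qsup {c : V | qle c a /\ qle c b} (fun c => proj1_sig c).

Definition nontrivial (V : quantale) : Prop := qbot V <> qtop V.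

Definition vrel (V : quantale) (X Y : Type) := X -> Y -> V.

Definition vle {V : quantale} {X Y : Type} (r r' : vrel V X Y) : Prop :=
  forall x y, qle (r x y) (r' x y).

Definition vcomp {V : quantale} {X Y Z : Type}
  (s : vrel V Y Z) (r : vrel V X Y) : vrel V X Z :=
  fun x z => qsup Y (fun y => qten (r x y) (s y z)).

Definition vconv {V : quantale} {X Y : Type} (r : vrel V X Y) : vrel V Y X :=
  fun y x => r x y.

Definition vmeet {V : quantale} {X Y : Type} (r r' : vrel V X Y) : vrel V X Y :=
  fun x y => qmeet (r x y) (r' x y).

(** a function as V-relation: value k on its graph, bot elsewhere *)
Definition vgraph (V : quantale) {X Y : Type} (f : X -> Y) : vrel V X Y :=
  fun x y => qsup (f x = y) (fun _ => qk).

Record functor := Functor {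
  fobj :> Type -> Type;
  fmap : forall X Y : Type, (X -> Y) -> fobj X -> fobj Y;
  fmap_id : forall (X : Type) (t : fobj X), fmap X X (fun x => x) t = t;
  fmap_comp : forall (X Y Z : Type) (f : X -> Y) (g : Y -> Z) (t : fobj X),
      fmap X Z (fun x => g (f x)) t = fmap Y Z g (fmap X Y f t)
}.
Arguments fmap F {X Y} : rename.

Definition lax_extension (V : quantale) (F : functor)
  (Fh : forall X Y : Type, vrel V X Y -> vrel V (F X) (F Y)) : Prop :=
  (forall X Y (r r' : vrel V X Y), vle r r' -> vle (Fh X Y r) (Fh X Y r'))
  /\ (forall X Y Z (r : vrel V X Y) (s : vrel V Y Z),
        vle (vcomp (Fh Y Z s) (Fh X Y r)) (Fh X Z (vcomp s r)))
  /\ (forall X Y (f : X -> Y),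
        vle (vgraph V (fmap F f)) (Fh X Y (vgraph V f))
        /\ vle (vconv (vgraph V (fmap F f))) (Fh Y X (vconv (vgraph V f)))).

Definition symmetric {V : quantale} {X : Type} (s : vrel V X X) : Prop :=
  s = vconv s.

Definition simulation {V : quantale} {F : functor}
  (Fh : forall X Y : Type, vrel V X Y -> vrel V (F X) (F Y))
  {X : Type} (alpha : X -> F X) (s : vrel V X X) : Prop :=
  vle (vcomp (vgraph V alpha) s) (vcomp (Fh X X s) (vgraph V alpha)).

Definition Fsym {V : quantale} {F : functor}
  (Fh : forall X Y : Type, vrel V X Y -> vrel V (F X) (F Y))
  {X : Type} (s : vrel V X X) : vrel V (F X) (F X) :=
  vmeet (Fh X X s) (vconv (Fh X X s)).

(* Main.v *)
Require Import Defs.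

Lemma ten_k_r (V : quantale) (a : V) : qten a qk = a.
Proof. rewrite qten_comm. apply qten_k. Qed.

Lemma ten_mono_r (V : quantale) (u a b : V) : qle a b -> qle (qten u a) (qten u b).
Proof.
  intro H.
  assert (E : b = qsup bool (fun i => if i then a else b)).
  { apply qle_antisym.
    - apply (qsup_ub _ bool (fun i => if i then a else b) false).
    - apply qsup_least; intros [|]; [exact H | apply qle_refl]. }
  rewrite E, qten_sup.
  apply (qsup_ub _ bool (fun i => qten u (if i then a else b)) true).
Qed.

Lemma le_graph_r (V : quantale) (A B : Type) (f : A -> B) (a : A) (u : V) :
  qle u (qten u (vgraph V f a (f a))).
Proof.
  eapply qle_trans; [| apply ten_mono_r; apply (qsup_ub _ _ (fun _ => qk) eq_refl)].
  rewrite ten_k_r. apply qle_refl.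
Qed.

Lemma graph_l_le (V : quantale) (A B : Type) (f : A -> B) (a : A) (g : B -> V) :
  qle (qsup B (fun b => qten (vgraph V f a b) (g b))) (g (f a)).
Proof.
  apply qsup_least; intro b. unfold vgraph.
  rewrite qten_comm, qten_sup. apply qsup_least; intros p; subst.
  rewrite ten_k_r. apply qle_refl.
Qed.

Theorem proposition9 (V : quantale) (F : functor)
  (Fh : forall X Y : Type, vrel V X Y -> vrel V (F X) (F Y))
  (X : Type) (alpha : X -> F X) (s : vrel V X X) :
  nontrivial V ->
  lax_extension V F Fh ->
  symmetric s ->
  simulation Fh alpha s ->
  vle (vcomp (vgraph V alpha) s) (vcomp (Fsym Fh s) (vgraph V alpha)).
Proof.
  intros _ _ Hsym Hsim.
  assert (K : forall x z, qle (s x z) (Fh X X s (alpha x) (alpha z))).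
  { intros x z.
    eapply qle_trans; [| apply (graph_l_le V X (F X) alpha x (fun b => Fh X X s b (alpha z)))].
    eapply qle_trans; [| apply (Hsim x (alpha z))].
    unfold vcomp.
    eapply qle_trans; [| apply (qsup_ub _ X _ z)].
    apply le_graph_r. }
  intros x t. unfold vcomp at 1.
  apply qsup_least; intro z. unfold vgraph at 1.
  rewrite qten_sup. apply qsup_least; intro p; subst t.
  rewrite ten_k_r.
  unfold vcomp.
  eapply qle_trans; [| apply (qsup_ub _ _ _ (alpha x))].
  idtac.
  eapply qle_trans; [| rewrite qten_comm; apply (le_graph_r V X (F X) alpha x)].
  unfold Fsym, vmeet, qmeet, vconv.
  assert (H1 := K x z). assert (H2 := K z x).
  assert (E : s z x = s x z) by exact (f_equal (fun r => r z x) Hsym).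
  rewrite E in H2.
  exact (qsup_ub _ _ (fun c : {c : V | qle c _ /\ qle c _} => proj1_sig c)
           (exist _ (s x z) (conj H1 H2))).
Qed.
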